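(* For any constant $\epsilon\in(0,1)$, there exists an $\widetilde{O}(n^{2/3})$-round deterministic $\mathsf{CONGEST}$ algorithm that lets each vertex $v_i$ of $P$ obtain (i) a good approximation of $X(\{i\},[j,\infty))$ for all $j>i$, and (ii) a good approximation of $X((-\infty,j],\{i\})$ for all $j<i$.
   Context: $G=(V,E)$ is a directed graph with $n=|V|$ and positive integer edge weights bounded by a polynomial in $n$; path lengths are sums of weights. $G$ is also the communication network (communication over edges in both directions). $\mathsf{CONGEST}$: synchronous rounds, each vertex may send an $O(\log n)$-bit message to each neighbour per round, unique identifiers, unlimited local computation. $P=(s=v_0,\dots,v_{h_{st}}=t)$ is a given shortest $s$-$t$ path; the endpoints of each edge of $P$ know it belongs to $P$, and each $v_i$ knows $i$, $\mathrm{dist}(s,v_i)$, $\mathrm{dist}(v_i,t)$. Let $\zeta=n^{2/3}$. For nonempty sets of integers $A,B$ with $\max A<\min B$, $X(A,B)$ is the minimum length of an $s$-$t$ path consisting of the subpath of $P$ from $s$ to $v_a$, a detour path from $v_a$ to $v_b$ with at most $\zeta$ edges sharing no edge with $P$, and the subpath of $P$ from $v_b$ to $t$, over all $a\in A$, $b\in B$ with $0\le a,b\le h_{st}$; $Y(A,B)$ is defined the same way without the bound on the number of edges of the detour (minimum over an empty set is $\infty$). A number $x$ is a good approximation of $X(A,B)$ if $Y(A,B)\le x\le(1+\epsilon)X(A,B)$. *)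

(* Defs.v *)
From HB Require Import structures.
From mathcomp Require Import all_boot all_order all_algebra.
From mathcomp Require Export reals.
Set Implicit Arguments. Unset Strict Implicit. Unset Printing Implicit Defensive.
Import Order.TTheory GRing.Theory Num.Theory.

(* w u v = 0 means "no edge u -> v"; w u v > 0 is the (positive integer)     *)
(* weight of the directed edge u -> v.                                       *)
Section Graph.
Variable n : nat.
Definition weights := 'I_n -> 'I_n -> nat.
Variable w : weights.

Definition is_walk (x : 'I_n) (p : seq 'I_n) : bool :=
  path (fun a b => 0 < w a b) x p.

Definition wedges (x : 'I_n) (p : seq 'I_n) : seq ('I_n * 'I_n) :=
  zip (x :: p) p.

Definition wlen (x : 'I_n) (p : seq 'I_n) : nat :=
  \sum_(e <- wedges x p) w e.1 e.2.

Definition shortest_path (s : 'I_n) (Pt : seq 'I_n) : Prop :=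
  is_walk s Pt /\
  forall q, is_walk s q -> last s q = last s Pt -> wlen s Pt <= wlen s q.

(* communication links: edges in either direction (no self loops) *)
Definition adj (u v : 'I_n) : bool := (u != v) && ((0 < w u v) || (0 < w v u)).

Section Path.
Variables (s : 'I_n) (Pt : seq 'I_n).
(* P = (v_0, ..., v_h), h = h_st = size Pt *)
Definition hst := size Pt.
Definition pv (i : nat) : 'I_n := nth s (s :: Pt) i.
(* length of the subpath of P from s to v_i  (= dist(s, v_i)) *)
Definition pref (i : nat) : nat := wlen s (take i Pt).
(* length of the subpath of P from v_i to t  (= dist(v_i, t)) *)
Definition suff (i : nat) : nat := wlen (pv i) (drop i Pt).
Definition Pedges := wedges s Pt.

(* L is the length of an s-t path  P[s,v_a] o D o P[v_b,t]  where D is a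
   detour walk from v_a to v_b sharing no (directed) edge with P; if
   [bounded] then D has at most zeta = n^(2/3) edges, i.e. |D|^3 <= n^2. *)
Definition cand (bounded : bool) (A B : nat -> Prop) (L : nat) : Prop :=
  exists a b (q : seq 'I_n),
    [/\ A a, B b, a <= hst, b <= hst &
    [/\ is_walk (pv a) q, last (pv a) q = pv b,
        ~~ has (fun e => e \in Pedges) (wedges (pv a) q),
        (bounded ==> (size q ^ 3 <= n ^ 2)) &
        L = pref a + wlen (pv a) q + suff b]].

(* X(A,B) = min (cand true A B), Y(A,B) = min (cand false A B), min of the
   empty set = oo.  Extended values: None = oo.  x is a good approximation
   of X(A,B) iff Y(A,B) <= x <= (1+eps) X(A,B).  Both inequalities are
   written out against the minimum of a set of naturals:
     Y <= x      <->  x = oo, or some Y-candidate L has L <= x;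
     x <= (1+eps) X  <->  every X-candidate L has x finite, x <= (1+eps) L. *)
Definition good_approx (R : realType) (eps : R) (x : option R)
    (A B : nat -> Prop) : Prop :=
  (match x return Prop with None => True
   | Some x => exists L, cand false A B L /\ (L%:R <= x)%R end) /\
  (forall L, cand true A B L ->
     match x return Prop with None => False | Some x => (x <= (1 + eps) * L%:R)%R end).
End Path.
End Graph.

Record LocalInput := {
  li_n : nat;
  li_id : nat;
  (* one entry per neighbour u: (id u, w(v,u), w(u,v), (v,u) in P, (u,v) in P) *)
  li_nbrs : seq (nat * nat * nat * bool * bool);
  (* if v = v_i is on P: Some (i, dist(s,v_i), dist(v_i,t)) *)
  li_path : option (nat * nat * nat) }.

(* What a vertex received in one round: sender id |-> message (None = none). *)
Definition Inbox := nat -> option nat.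

(* A deterministic algorithm: the message sent to the neighbour with a given
   id, and the final output, are arbitrary functions (unlimited local
   computation) of the local input and the history of received messages;
   [rounds n] is the number of rounds run on n-vertex graphs.  Output:
   (j |-> approximation of X({i},[j,oo)),  j |-> approximation of
   X((-oo,j],{i})), values in R extended with None = oo. *)
Record Algorithm (R : realType) := {
  alg_msg : LocalInput -> seq Inbox -> nat -> option nat;
  alg_out : LocalInput -> seq Inbox -> (nat -> option R) * (nat -> option R);
  alg_rounds : nat -> nat }.

Section Exec.
Variables (R : realType) (Alg : Algorithm R).
Variables (n : nat) (w : weights n) (id : 'I_n -> nat) (s : 'I_n) (Pt : seq 'I_n).

Definition local_input (v : 'I_n) : LocalInput :=
  {| li_n := n;
     li_id := id v;
     li_nbrs := [seq (id u, w v u, w u v, (v, u) \in Pedges s Pt,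
                      (u, v) \in Pedges s Pt) | u <- enum 'I_n & adj w u v];
     li_path := if v \in s :: Pt then
                  let i := index v (s :: Pt) in
                  Some (i, pref w s Pt i, suff w s Pt i)
                else None |}.

Fixpoint history (r : nat) : 'I_n -> seq Inbox :=
  match r with
  | 0 => fun _ => [::]
  | r'.+1 => fun v =>
      rcons (history r' v)
        (fun x => match [pick u | adj w u v && (id u == x)] with
                  | Some u => alg_msg Alg (local_input u) (history r' u) (id v)
                  | None => None
                  end)
  end.

(* every message sent during the run has O(log n) bits: value < n^cB *)
Definition bandwidth_ok (cB : nat) : Prop :=
  forall r u v, r < alg_rounds Alg n -> adj w u v ->
    match alg_msg Alg (local_input u) (history r u) (id v) return Prop with
    | None => True
    | Some m => m < n ^ cB
    end.

Definition output (v : 'I_n) := alg_out Alg (local_input v) (history (alg_rounds Alg n) v).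
End Exec.

(* Main.v *)
Require Import Defs.
From HB Require Import structures.
From mathcomp Require Import all_boot all_order all_algebra.
From mathcomp Require Import reals.
From mathcomp Require Import zify lra.
Import Order.TTheory GRing.Theory Num.Theory.
Set Implicit Arguments. Unset Strict Implicit. Unset Printing Implicit Defensive.

Section Walks.
Variables (n : nat) (w : weights n).
Implicit Types (x y : 'I_n) (p q : seq 'I_n).

Lemma wedges_cons x y p : wedges x (y :: p) = (x, y) :: wedges y p.
Proof. by []. Qed.

Lemma wlen_nil x : wlen w x [::] = 0.
Proof. by rewrite /wlen big_nil. Qed.

Lemma wlen_cons x y p : wlen w x (y :: p) = w x y + wlen w y p.
Proof. by rewrite /wlen wedges_cons big_cons. Qed.

Lemma wedges_cat x p1 p2 :
  wedges x (p1 ++ p2) = wedges x p1 ++ wedges (last x p1) p2.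
Proof. by elim: p1 x => [|y p1 IH] x //=; rewrite !wedges_cons IH. Qed.

Lemma wlen_cat x p1 p2 : wlen w x (p1 ++ p2) = wlen w x p1 + wlen w (last x p1) p2.
Proof. by rewrite /wlen wedges_cat big_cat. Qed.

Lemma wedges_rcons x p y : wedges x (rcons p y) = rcons (wedges x p) (last x p, y).
Proof. by rewrite -!cats1 wedges_cat. Qed.

Lemma wlen_rcons x p y : wlen w x (rcons p y) = wlen w x p + w (last x p) y.
Proof. by rewrite -cats1 wlen_cat wlen_cons wlen_nil addn0. Qed.

Lemma uniqify x p : is_walk w x p -> exists p',
  [/\ is_walk w x p', last x p' = last x p, uniq (x :: p'), size p' <= size p &
   [/\ {subset wedges x p' <= wedges x p}, wlen w x p' <= wlen w x p,
       (~~ uniq (x :: p) -> wlen w x p' < wlen w x p) & (uniq (x :: p) -> p' = p)]].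
Proof.
elim: p x => [|y p0 IH] x.
  by move=> _; exists [::]; split => //; split.
rewrite /is_walk /= => /andP [wxy Hw].
have [p0' [Hw' Hl' Hu' Hs' [Hsub' Hle' Hlt' Heq']]] := IH y Hw.
case Hin: (x \in y :: p0').
  pose l := y :: p0'.
  have El : l = take (index x l) l ++ x :: drop (index x l).+1 l.
    by rewrite -{1}(cat_take_drop (index x l) l) (drop_nth x) ?index_mem // nth_index.
  set p1 := take _ l in El; set p2 := drop _ l in El.
  have Hwl : is_walk w x l by rewrite /is_walk /= wxy.
  have Hul : uniq l := Hu'.
  rewrite El in Hwl Hul.
  move: Hwl; rewrite /is_walk cat_path /= => /andP [Hw1 /andP [Hlx Hw2]].
  have Hlt : wlen w x p2 < wlen w x (y :: p0).
    rewrite wlen_cons; apply: (@leq_trans (wlen w x l)); last by rewrite /l wlen_cons leq_add2l.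
    rewrite El wlen_cat wlen_cons; rewrite addnA -[X in X < _]add0n ltn_add2r.
    by apply: leq_trans Hlx (leq_addl _ _).
  exists p2; split => //.
  - have -> : last x p2 = last x (p1 ++ x :: p2) by rewrite last_cat.
    by rewrite -El /l /= Hl'.
  - by move: Hul; rewrite cat_uniq => /and3P [].
  - have : size l = size p1 + (size p2).+1 by rewrite {1}El size_cat.
    by rewrite /l /= => Hsz; move: Hs'; rewrite /= ; lia.
  split.
  - move=> e He; rewrite wedges_cons inE.
    have : e \in wedges x l.
      by rewrite El wedges_cat mem_cat wedges_cons inE He !orbT.
    by rewrite /l wedges_cons inE => /orP [->|/Hsub' ->]; rewrite ?orbT.
  - exact: ltnW.
  - by [].
  - move=> Hu. exfalso. have Ep : p0' = p0 by apply: Heq'; case/andP: Hu.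
    by move: Hin; rewrite Ep; case/andP: Hu => /negP.
exists (y :: p0'); split => //.
- by rewrite /is_walk /= wxy.
- by rewrite /= Hin.
split.
- by move=> e; rewrite !wedges_cons !inE => /orP [->|/Hsub' ->]; rewrite ?orbT.
- by rewrite !wlen_cons leq_add2l.
- move=> Hnu; rewrite !wlen_cons ltn_add2l.
  case Hu0: (uniq (y :: p0)); last by apply: Hlt'; rewrite Hu0.
  exfalso; move: Hnu; have := Hu0; rewrite /= => /andP [-> ->]; rewrite !andbT negbK => Hx.
  by move: Hin; rewrite (Heq' Hu0) Hx.
- by move=> /andP [_ Hu]; rewrite Heq'.
Qed.

Lemma uniq_path_neq x p : uniq (x :: p) -> path (fun a b => a != b) x p.
Proof.
elim: p x => [|y p IH] x //= /andP [Hx /andP [Hy Hu]].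
rewrite IH /= ?Hy ?Hu // andbT; apply/eqP => Exy; move: Hx; rewrite Exy inE eqxx.
by [].
Qed.

Lemma wlen_bound x p B : (forall a b, w a b <= B) -> wlen w x p <= size p * B.
Proof.
move=> HB; elim: p x => [|y p IH] x; first by rewrite wlen_nil.
by rewrite wlen_cons /= mulSn leq_add.
Qed.

End Walks.

Definition maxl (l : seq nat) := foldr maxn 0 l.

Lemma maxl_ge x l : x \in l -> x <= maxl l.
Proof.
elim: l => [|y l IH] //=; rewrite inE => /orP [/eqP ->|/IH H].
  by rewrite leq_maxl.
by rewrite (leq_trans H) // leq_maxr.
Qed.

Lemma maxl_in l : 0 < maxl l -> maxl l \in l.
Proof.
elim: l => [|y l IH] // H; rewrite inE; change (maxl (y::l)) with (maxn y (maxl l)) in H |- *.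
case: (leqP y (maxl l)) => Hy.
  by rewrite IH ?orbT // -(maxn_idPr Hy).
by rewrite eqxx.
Qed.

Lemma maxl_le l B : (forall x, x \in l -> x <= B) -> maxl l <= B.
Proof.
elim: l => [|y l IH] //= H; rewrite geq_max H ?inE ?eqxx // IH // => x Hx.
by rewrite H // inE Hx orbT.
Qed.

Definition omin (a b : option nat) : option nat :=
  match a, b with
  | Some x, Some y => Some (minn x y)
  | Some x, None => Some x
  | None, _ => b
  end.
Definition ominl (l : seq (option nat)) := foldr omin None l.

Lemma ominl_in l x : ominl l = Some x -> Some x \in l.
Proof.
elim: l x => [|[y|] l IH] x //=; rewrite inE.
- case E: (ominl l) => [z|] /=; last by case=> ->; rewrite eqxx.
  case=> <-; rewrite /minn; case: ltnP => _; first by rewrite eqxx.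
  by rewrite IH ?orbT.
- by move=> /IH ->; rewrite orbT.
Qed.

Lemma ominl_le l y : Some y \in l -> exists2 x, ominl l = Some x & x <= y.
Proof.
elim: l => [|a l IH] //=; rewrite inE => /orP [/eqP <-|/IH [x Hx Hxy]].
  case: (ominl l) => [z|] /=; last by exists y.
  by exists (minn y z) => //; rewrite geq_minl.
rewrite Hx; case: a => [a|] /=; last by exists x.
by exists (minn a x) => //; rewrite (leq_trans _ Hxy) // geq_minr.
Qed.

Definition zeta (n : nat) : nat := \max_(z < n.+1 | z ^ 3 <= n ^ 2) z.

Lemma cube_le z n : z ^ 3 <= n ^ 2 -> z <= n.
Proof. move=> H; nia. Qed.

Lemma zeta_ge z n : z ^ 3 <= n ^ 2 -> z <= zeta n.
Proof.
move=> H; have Hz : z < n.+1 by rewrite ltnS cube_le.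
exact: (@leq_bigmax_cond _ (fun i : 'I_n.+1 => i ^ 3 <= n ^ 2) (fun i => nat_of_ord i) (Ordinal Hz)).
Qed.

Lemma zeta_cube n : zeta n ^ 3 <= n ^ 2.
Proof.
rewrite /zeta; apply: (big_ind (fun x => x ^ 3 <= n ^ 2)) => //.
by move=> x y Hx Hy; case: (leqP x y).
Qed.

Lemma zeta_le n : zeta n <= n.
Proof. exact: cube_le (zeta_cube n). Qed.

Definition ceiln (a U : nat) := (a + U.-1) %/ U.

Lemma ceilnP a U : 0 < U -> a <= ceiln a U * U /\ ceiln a U * U <= a + U.-1.
Proof.
move=> HU; split; last exact: leq_trunc_div.
have := ltn_ceil (a + U.-1) HU; rewrite /ceiln mulSn.
set c := _ %/ U; move: c => c; case: U HU => // U _ /=; lia.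
Qed.

Lemma ceiln_gt0 a U : 0 < U -> 0 < a -> 0 < ceiln a U.
Proof.
move=> HU Ha; have [H _] := ceilnP a HU; move: H; case: (ceiln a U) => //.
by rewrite mul0n leqn0 => /eqP Ha0; rewrite Ha0 in Ha.
Qed.

Definition TnF m n := 2 * (m * (zeta n).+1) + zeta n + 2.
Definition unitU m n sc := maxn 1 (2 ^ sc %/ (m * (zeta n).+1)).
Definition Sc c n := (c + 2) * (trunc_log 2 n).+1 + 2.
Definition rounds m c n := if n is 0 then 0 else Sc c n * TnF m n.
Definition Tof m n r := r %% TnF m n.
Definition Uof m n r := unitU m n (r %/ TnF m n).

Definition Entry := (nat * nat * nat * bool * bool)%type.
Definition unpack1 n (o : option nat) := if o is Some p then p %% n.+1 else 0.
Definition unpack2 n (o : option nat) := if o is Some p then minn n (p %/ n.+1) else 0.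
Definition pack n (x : nat * nat) := x.1 + n.+1 * x.2.

Definition base1 m (li : LocalInput) r :=
  if li_path li is Some (b, _, su) then
    (if ceiln su (Uof m (li_n li) r) <= Tof m (li_n li) r then b.+1 else 0) else 0.
Definition base2 m (li : LocalInput) r :=
  if li_path li is Some (a, pr, _) then
    (if ceiln pr (Uof m (li_n li) r) <= Tof m (li_n li) r then li_n li - a else 0) else 0.
Definition cond1 m n r (e : Entry) :=
  (0 < e.1.1.1.2) && ~~ e.1.2 && (ceiln e.1.1.1.2 (Uof m n r) <= Tof m n r).
Definition cond2 m n r (e : Entry) :=
  (0 < e.1.1.2) && ~~ e.2 && (ceiln e.1.1.2 (Uof m n r) <= Tof m n r).
Definition rec1 m (li : LocalInput) (look : nat -> nat -> option nat) r :=
  maxl [seq unpack1 (li_n li) (look (r - ceiln e.1.1.1.2 (Uof m (li_n li) r)) e.1.1.1.1)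
       | e <- li_nbrs li & cond1 m (li_n li) r e].
Definition rec2 m (li : LocalInput) (look : nat -> nat -> option nat) r :=
  maxl [seq unpack2 (li_n li) (look (r - ceiln e.1.1.2 (Uof m (li_n li) r)) e.1.1.1.1)
       | e <- li_nbrs li & cond2 m (li_n li) r e].
Definition Fcore m li look r : nat * nat :=
  (maxn (base1 m li r) (rec1 m li look r), maxn (base2 m li r) (rec2 m li look r)).

Definition lookh (h : seq Inbox) (k : nat) (x : nat) : option nat :=
  nth (fun _ => None) h k x.

Definition msgF m (li : LocalInput) (h : seq Inbox) (dst : nat) : option nat :=
  Some (pack (li_n li) (Fcore m li (lookh h) (size h))).

Definition best1 m c (li : LocalInput) (h : seq Inbox) (j : nat) : option nat :=
  if li_path li is Some (_, pr, _) then
    ominl [seq (if j < (Fcore m li (lookh h) r).1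
                then Some (pr + Tof m (li_n li) r * Uof m (li_n li) r) else None)
          | r <- iota 0 (rounds m c (li_n li))]
  else None.
Definition best2 m c (li : LocalInput) (h : seq Inbox) (j : nat) : option nat :=
  if li_path li is Some (_, _, su) then
    ominl [seq (if li_n li - j <= (Fcore m li (lookh h) r).2
                then Some (Tof m (li_n li) r * Uof m (li_n li) r + su) else None)
          | r <- iota 0 (rounds m c (li_n li))]
  else None.

Definition AlgD (R : realType) m c : Algorithm R :=
  {| alg_msg := msgF m;
     alg_out := fun li h => (fun j => omap (fun x : nat => ((x%:R)%R : R)) (best1 m c li h j),
                             fun j => omap (fun x : nat => ((x%:R)%R : R)) (best2 m c li h j));
     alg_rounds := rounds m c |}.

Lemma Fcore_ext m li (l1 l2 : nat -> nat -> option nat) r :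
  (forall k, k < r -> l1 k = l2 k) -> Fcore m li l1 r = Fcore m li l2 r.
Proof.
move=> H; rewrite /Fcore /rec1 /rec2; congr (_, _); congr maxn; congr maxl;
  apply/eq_in_map => e; rewrite mem_filter => /andP [He _]; rewrite H //.
- move: He; rewrite /cond1 /Tof => /andP [/andP [Hw _] Hc].
  have Hc0 : 0 < ceiln e.1.1.1.2 (Uof m (li_n li) r) by apply: ceiln_gt0; rewrite // /Uof /unitU leq_maxl.
  have := leq_trans Hc (leq_mod _ _); move: Hc0; move: (ceiln _ _) => x; lia.
- move: He; rewrite /cond2 /Tof => /andP [/andP [Hw _] Hc].
  have Hc0 : 0 < ceiln e.1.1.2 (Uof m (li_n li) r) by apply: ceiln_gt0; rewrite // /Uof /unitU leq_maxl.
  have := leq_trans Hc (leq_mod _ _); move: Hc0; move: (ceiln _ _) => x; lia.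
Qed.

Lemma sum_ceil (X : Type) (l : seq X) (f : X -> nat) U : 0 < U ->
  (\sum_(e <- l) ceiln (f e) U) * U <= \sum_(e <- l) f e + size l * U.-1.
Proof.
move=> HU; elim: l => [|e l IH]; first by rewrite !big_nil.
rewrite !big_cons mulnDl /= mulSn.
have [_ H2] := ceilnP (f e) HU.
by rewrite addnACA leq_add.
Qed.

Lemma tl_lt Q e : 0 < e -> Q < 2 ^ e -> trunc_log 2 Q < e.
Proof.
move=> He HQ; case: (posnP Q) => [->|HQ0]; first by rewrite trunc_log0.
have := trunc_logP (isT : 1 < 2) HQ0 => H.
by rewrite -(ltn_exp2l _ _ (isT : 1 < 2)); apply: leq_ltn_trans H HQ.
Qed.

Lemma scale_arith m z Q k A U sc : 2 <= m -> k <= z.+1 -> Q < 2 ^ sc ->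
  2 ^ sc <= 2 * maxn Q 1 -> U = maxn 1 (2 ^ sc %/ (m * z.+1)) ->
  A * U <= Q + k * U.-1 ->
  A < 2 * (m * z.+1) + z + 2 /\ m * (A * U) <= (m + 2) * Q.
Proof.
move=> Hm Hk HQ H2 EU HA.
set M := m * z.+1 in EU *; set P := 2 ^ sc in HQ H2 EU.
have HM : 2 <= M by rewrite /M; nia.
have HP1 : 2 ^ sc %/ M * M <= P := leq_trunc_div _ _.
have HP2 : P < (2 ^ sc %/ M).+1 * M := ltn_ceil _ (leq_trans (isT : 0 < 2) HM).
subst U; move: HP1 HP2 HA; rewrite -/P; set V := P %/ M => HP1 HP2 HA.
case: (leqP V 1) => HV.
  rewrite (maxn_idPl HV) muln1 /= muln0 addn0 in HA *.
  have : P < 2 * M by apply: leq_trans HP2 _; rewrite leq_mul2r ltnS HV orbT.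
  split; first by lia.
  by rewrite leq_mul // leq_addr.
rewrite (maxn_idPr (ltnW HV)) in HA *.
have HQ2 : 2 <= Q by move: H2; nia.
have HP2Q : P <= 2 * Q by move: H2; rewrite (maxn_idPl (ltnW HQ2)).
have HkV : k * V.-1 <= z.+1 * V by apply: leq_mul => //; rewrite leq_pred.
split.
  have : A * V < (2 * M + z.+1) * V.
    rewrite mulnDl; apply: (leq_ltn_trans HA); rewrite -addnS.
    apply: leq_add.
      apply: leq_trans (leq_trans (ltnW HQ) (ltnW HP2)) _.
      rewrite mulnAC leq_mul2r; apply/orP; right; lia.
    apply: leq_ltn_trans (leq_mul Hk (leqnn _)) _.
    by rewrite ltn_pmul2l // ltn_predL; apply: leq_trans HV.
  by rewrite ltn_mul2r => /andP [_]; lia.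
have H3 : m * (z.+1 * V) <= P by rewrite mulnA -/M mulnC.
apply: leq_trans (leq_mul (leqnn m) HA) _.
rewrite mulnDr mulnDl leq_add2l; apply: leq_trans (leq_mul (leqnn m) HkV) _.
by apply: leq_trans H3 _.
Qed.

Lemma real_step (R : realType) (eps : R) m x L : (0 < eps)%R -> (2 / eps < m%:R)%R ->
  0 < m -> m * x <= (m + 2) * L -> (x%:R <= (1 + eps) * L%:R :> R)%R.
Proof.
move=> He Hm Hm0 H.
have H1 : (m%:R * x%:R <= (m%:R + 2) * L%:R :> R)%R.
  by rewrite -natrM -(natrD _ m 2) -natrM ler_nat.
have H2 : (2 < eps * m%:R :> R)%R.
  by rewrite -(ltr_pdivrMl _ _ He) mulrC.
have H3 : (0 < m%:R :> R)%R by rewrite ltr0n.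
have H4 : (0 <= L%:R :> R)%R by rewrite ler0n.
nra.
Qed.

Lemma size_wedges n (x : 'I_n) p : size (wedges x p) = size p.
Proof. by rewrite /wedges size2_zip //= leqnSn. Qed.

Lemma rounds_bound m c n :
  rounds m c n ^ 3 <= 8 * ((c + 4) * (2 * m + 2)) ^ 3 * n ^ 2 * (trunc_log 2 n).+1 ^ 3.
Proof.
case: n => [|n]; first by [].
set L := (trunc_log 2 n.+1).+1; set z := zeta n.+1.
have Hz1 : 1 <= z by apply: zeta_ge; rewrite exp1n expn_gt0.
have HS : Sc c n.+1 <= (c + 4) * L by rewrite /Sc -/L; have : 1 <= L by []; nia.
have HT : TnF m n.+1 <= (2 * m + 2) * z.+1 by rewrite /TnF -/z; nia.
have Hz3 : z.+1 ^ 3 <= 8 * n.+1 ^ 2.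
  apply: leq_trans (_ : (2 * z) ^ 3 <= _).
    by rewrite leq_exp2r //; lia.
  by rewrite expnMn leq_mul2l zeta_cube.
have E1 : rounds m c n.+1 ^ 3 <= ((c + 4) * (2 * m + 2) * L * z.+1) ^ 3.
  rewrite leq_exp2r // /rounds -mulnA -mulnACA; exact: leq_mul HS HT.
apply: leq_trans E1 _; rewrite !expnMn.
move: ((c + 4) ^ 3 * (2 * m + 2) ^ 3) (L ^ 3) Hz3 => X Y; move: (z.+1 ^ 3) (n.+1 ^ 2) => Z W.
move=> H; apply: leq_trans (leq_mul (leqnn (X * Y)) H) _; lia.
Qed.

Lemma pack_bound n x1 x2 : 2 <= n -> x1 <= n -> x2 <= n -> x1 + n.+1 * x2 < n ^ 4.
Proof.
move=> Hn H1 H2; apply: (@leq_trans (n.+1 * n.+1)).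
  by apply: leq_ltn_trans (leq_add H1 (leq_mul (leqnn _) H2)) _; lia.
have : n.+1 <= n * n by nia.
by rewrite (_ : n ^ 4 = (n * n) * (n * n)); [move=> H; apply: leq_mul | by rewrite !expnS expn0 muln1 !mulnA].
Qed.

Lemma exp_mono a b e : a <= b -> a ^ e <= b ^ e.
Proof. by move=> H; elim: e => // e IH; rewrite !expnS leq_mul. Qed.

Lemma Q_bound n c (Q : nat) : 0 < n -> Q <= 2 * n * n ^ c ->
  Q < 2 ^ ((c + 2) * (trunc_log 2 n).+1).
Proof.
move=> Hn HQ; have HL := trunc_log_ltn n (isT : 1 < 2).
rewrite mulnC expnM; apply: leq_ltn_trans HQ _.
apply: (@leq_trans (n.+1 ^ (c + 2))); last exact: exp_mono.
rewrite expnD mulnC; apply: leq_ltn_trans (_ : _ <= n.+1 ^ c * (2 * n)) _.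
  by rewrite leq_mul2r exp_mono ?orbT.
rewrite ltn_mul2l expn_gt0 /=; nia.
Qed.

Lemma rounds_pos m c n : 0 < n -> rounds m c n = Sc c n * TnF m n.
Proof. by case: n. Qed.

Section Exec.
Variables (R : realType) (m c n : nat) (w : weights n) (id : 'I_n -> nat).
Variables (s : 'I_n) (Pt : seq 'I_n).
Hypotheses (Hid : injective id) (Hsp : shortest_path w s Pt) (Hm : 0 < m).

Local Notation Alg := (AlgD R m c).
Local Notation li := (local_input w id s Pt).
Local Notation H r u := (history Alg w id s Pt r u).

Definition Jv u r := Fcore m (li u) (lookh (H r u)) r.

Lemma size_hist r u : size (H r u) = r.
Proof. by elim: r u => //= r IH u; rewrite size_rcons IH. Qed.

Lemma hist_nth r u k : k < r ->
  nth (fun _ => None) (H r u) k = nth (fun _ => None) (H k.+1 u) k.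
Proof.
elim: r => // r IH; rewrite ltnS leq_eqVlt => /orP [/eqP ->//|Hk].
by rewrite [H r.+1 u]/= nth_rcons size_hist Hk IH.
Qed.

Lemma lookh_adj r u y k : k < r -> adj w y u ->
  lookh (H r u) k (id y) = Some (pack n (Jv y k)).
Proof.
move=> Hk Hadj; rewrite /lookh hist_nth // [H k.+1 u]/= nth_rcons size_hist ltnn eqxx.
case: pickP => [z /andP [Hz /eqP Hzy]|Hn]; last by have := Hn y; rewrite Hadj eqxx.
by have Ez := Hid Hzy; subst z; rewrite /= /msgF size_hist.
Qed.

Lemma P_uniq : uniq (s :: Pt).
Proof.
case: Hsp => Hw Hmin; apply/negPn/negP => Hnu.
have [p' [Hw' Hl' _ _ [_ _ Hlt _]]] := uniqify Hw.
by have := Hmin p' Hw' Hl'; rewrite leqNgt Hlt.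
Qed.

Lemma hst_lt : hst Pt < n.
Proof.
have := max_card (mem (s :: Pt)); rewrite card_ord (card_uniqP P_uniq) /=.
by rewrite /hst.
Qed.

Lemma index_pv b : b <= hst Pt -> index (pv s Pt b) (s :: Pt) = b.
Proof. by move=> Hb; rewrite /pv index_uniq ?P_uniq. Qed.

Lemma pv_in b : b <= hst Pt -> pv s Pt b \in s :: Pt.
Proof. by move=> Hb; rewrite /pv mem_nth. Qed.

Lemma li_path_pv b : b <= hst Pt ->
  li_path (li (pv s Pt b)) = Some (b, pref w s Pt b, suff w s Pt b).
Proof. by move=> Hb; have := index_pv Hb; have := pv_in Hb; rewrite /pv /= => -> ->. Qed.

Lemma li_pathP u b pr su : li_path (li u) = Some (b, pr, su) ->
  [/\ u = pv s Pt b, b <= hst Pt, pr = pref w s Pt b & su = suff w s Pt b].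
Proof.
rewrite /=; case: ifP => // Hu [<- <- <-]; split => //.
- by rewrite /pv nth_index.
- by have := Hu; rewrite -index_mem /= ltnS.
Qed.

Lemma unpack1_pack x : x.1 <= n -> unpack1 n (Some (pack n x)) = x.1.
Proof. by move=> Hx; rewrite /= /pack addnC mulnC modnMDl modn_small. Qed.

Lemma unpack2_pack x : x.1 <= n -> x.2 <= n -> unpack2 n (Some (pack n x)) = x.2.
Proof.
move=> H1 H2; rewrite /= /pack addnC mulnC divnMDl // divn_small // addn0.
exact: minn_idPr.
Qed.

Lemma Jv1_le u r : (Jv u r).1 <= n.
Proof.
rewrite /Jv /Fcore /= geq_max; apply/andP; split.
  rewrite /base1; case E: (li_path _) => [[[b pr] su]|] //.
  have [_ Hb _ _] := li_pathP E; case: ifP => // _; have := hst_lt; lia.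
apply: maxl_le => x /mapP [e _ ->]; case: (lookh _ _ _) => //= p.
by rewrite -ltnS ltn_pmod.
Qed.

Lemma Jv2_le u r : (Jv u r).2 <= n.
Proof.
rewrite /Jv /Fcore /= geq_max; apply/andP; split.
  by rewrite /base2; case: (li_path _) => [[[b pr] su]|] //; case: ifP => //; rewrite leq_subr.
apply: maxl_le => x /mapP [e _ ->]; case: (lookh _ _ _) => //= p.
by rewrite geq_minl.
Qed.

Lemma look1 r u y k : k < r -> adj w y u ->
  unpack1 n (lookh (H r u) k (id y)) = (Jv y k).1.
Proof. by move=> Hk Ha; rewrite lookh_adj // unpack1_pack // Jv1_le. Qed.

Lemma look2 r u y k : k < r -> adj w y u ->
  unpack2 n (lookh (H r u) k (id y)) = (Jv y k).2.
Proof. by move=> Hk Ha; rewrite lookh_adj // unpack2_pack // ?Jv1_le ?Jv2_le. Qed.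

Lemma Uof_gt0 r : 0 < Uof m n r.
Proof. by rewrite /Uof /unitU leq_maxl. Qed.

Lemma sub_lt r x : 0 < x -> x <= Tof m n r -> r - x < r.
Proof. by move=> H0 Hx; have := leq_trans Hx (leq_mod _ _); lia. Qed.


Lemma Jv1E u r : (Jv u r).1 = maxn (base1 m (li u) r) (rec1 m (li u) (lookh (H r u)) r).
Proof. by []. Qed.
Lemma Jv2E u r : (Jv u r).2 = maxn (base2 m (li u) r) (rec2 m (li u) (lookh (H r u)) r).
Proof. by []. Qed.

Lemma base1_pv r b : b <= hst Pt -> ceiln (suff w s Pt b) (Uof m n r) <= Tof m n r ->
  b.+1 <= (Jv (pv s Pt b) r).1.
Proof.
move=> Hb Hc; rewrite Jv1E; apply: leq_trans (leq_maxl _ _).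
by rewrite /base1 li_path_pv //= Hc.
Qed.

Lemma base2_pv r a : a <= hst Pt -> ceiln (pref w s Pt a) (Uof m n r) <= Tof m n r ->
  n - a <= (Jv (pv s Pt a) r).2.
Proof.
move=> Hb Hc; rewrite Jv2E; apply: leq_trans (leq_maxl _ _).
by rewrite /base2 li_path_pv //= Hc.
Qed.

Lemma rec1_in r u y : adj w y u -> 0 < w u y -> (u, y) \notin Pedges s Pt ->
  ceiln (w u y) (Uof m n r) <= Tof m n r ->
  (Jv y (r - ceiln (w u y) (Uof m n r))).1 <= (Jv u r).1.
Proof.
move=> Ha Hw HP Hc; rewrite [X in _ <= X]Jv1E; apply: leq_trans (leq_maxr _ _).
apply: maxl_ge; apply/mapP.
exists (id y, w u y, w y u, (u, y) \in Pedges s Pt, (y, u) \in Pedges s Pt).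
  rewrite mem_filter /cond1 /= Hw HP Hc /=.
  by apply/mapP; exists y => //; rewrite mem_filter mem_enum Ha.
rewrite /= look1 //; apply: sub_lt => //; apply: ceiln_gt0 => //; exact: Uof_gt0.
Qed.

Lemma rec2_in r u y : adj w y u -> 0 < w y u -> (y, u) \notin Pedges s Pt ->
  ceiln (w y u) (Uof m n r) <= Tof m n r ->
  (Jv y (r - ceiln (w y u) (Uof m n r))).2 <= (Jv u r).2.
Proof.
move=> Ha Hw HP Hc; rewrite [X in _ <= X]Jv2E; apply: leq_trans (leq_maxr _ _).
apply: maxl_ge; apply/mapP.
exists (id y, w u y, w y u, (u, y) \in Pedges s Pt, (y, u) \in Pedges s Pt).
  rewrite mem_filter /cond2 /= Hw HP Hc /=.
  by apply/mapP; exists y => //; rewrite mem_filter mem_enum Ha.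
rewrite /= look2 //; apply: sub_lt => //; apply: ceiln_gt0 => //; exact: Uof_gt0.
Qed.

Lemma rec1_cases r u : 0 < (Jv u r).1 ->
  (exists b, [/\ u = pv s Pt b, b <= hst Pt,
     ceiln (suff w s Pt b) (Uof m n r) <= Tof m n r & (Jv u r).1 = b.+1]) \/
  (exists y, [/\ adj w y u, 0 < w u y, (u, y) \notin Pedges s Pt,
     ceiln (w u y) (Uof m n r) <= Tof m n r &
     (Jv u r).1 = (Jv y (r - ceiln (w u y) (Uof m n r))).1]).
Proof.
rewrite Jv1E; set b1 := base1 _ _ _; set r1 := rec1 _ _ _ _.
case: (leqP r1 b1) => Hle H0.
  left; move: H0; rewrite /b1 /base1; case E: (li_path _) => [[[b pr] su]|] //.
  have [-> Hb _ ->] := li_pathP E; case: ifP => // Hc _; exists b; split => //.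
right; have := maxl_in (leq_ltn_trans (leq0n _) Hle); rewrite -/r1 /r1 /rec1.
case/mapP => e; rewrite mem_filter => /andP [He /mapP [y]].
rewrite mem_filter mem_enum andbT => Ha Ee ->; subst e.
move: He; rewrite /cond1 /= => /andP [/andP [Hw HP] Hc].
exists y; split => //; rewrite look1 //; apply: sub_lt => //.
by apply: ceiln_gt0 => //; exact: Uof_gt0.
Qed.

Lemma rec2_cases r u : 0 < (Jv u r).2 ->
  (exists a, [/\ u = pv s Pt a, a <= hst Pt,
     ceiln (pref w s Pt a) (Uof m n r) <= Tof m n r & (Jv u r).2 = n - a]) \/
  (exists y, [/\ adj w y u, 0 < w y u, (y, u) \notin Pedges s Pt,
     ceiln (w y u) (Uof m n r) <= Tof m n r &
     (Jv u r).2 = (Jv y (r - ceiln (w y u) (Uof m n r))).2]).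
Proof.
rewrite Jv2E; set b1 := base2 _ _ _; set r1 := rec2 _ _ _ _.
case: (leqP r1 b1) => Hle H0.
  left; move: H0; rewrite /b1 /base2; case E: (li_path _) => [[[b pr] su]|] //.
  have [-> Hb -> _] := li_pathP E; case: ifP => // Hc _; exists b; split => //.
right; have := maxl_in (leq_ltn_trans (leq0n _) Hle); rewrite -/r1 /r1 /rec2.
case/mapP => e; rewrite mem_filter => /andP [He /mapP [y]].
rewrite mem_filter mem_enum andbT => Ha Ee ->; subst e.
move: He; rewrite /cond2 /= => /andP [/andP [Hw HP] Hc].
exists y; split => //; rewrite look2 //; apply: sub_lt => //.
by apply: ceiln_gt0 => //; exact: Uof_gt0.
Qed.


Lemma TnF_gt0 : 0 < TnF m n.
Proof. by rewrite /TnF addn2. Qed.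

Lemma sub_dec r x : x <= Tof m n r ->
  Tof m n (r - x) = Tof m n r - x /\ Uof m n (r - x) = Uof m n r.
Proof.
move=> Hx; rewrite /Tof /Uof in Hx *; set T := TnF m n in Hx *.
have HT : 0 < T := TnF_gt0.
have E : r - x = r %/ T * T + (r %% T - x) by rewrite {1}(divn_eq r T) addnBA.
have Hs : r %% T - x < T by apply: leq_ltn_trans (leq_subr _ _) (ltn_pmod _ _).
by rewrite E modnMDl modn_small // divnMDl // (divn_small Hs) addn0.
Qed.

Lemma TU_dec sc T : T < TnF m n ->
  Tof m n (sc * TnF m n + T) = T /\ Uof m n (sc * TnF m n + T) = unitU m n sc.
Proof.
move=> HT; rewrite /Tof /Uof modnMDl modn_small // divnMDl ?TnF_gt0 //.
by rewrite divn_small // addn0.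
Qed.

Definition inP (e : 'I_n * 'I_n) := e \in Pedges s Pt.

Lemma sound1 r u : 0 < (Jv u r).1 -> exists b q,
  [/\ (Jv u r).1 = b.+1, b <= hst Pt, is_walk w u q, last u q = pv s Pt b &
      ~~ has inP (wedges u q) /\
      wlen w u q + suff w s Pt b <= Tof m n r * Uof m n r].
Proof.
elim/ltn_ind: r u => r IH u H0.
case: (rec1_cases H0) => [[b [-> Hb Hc ->]]|[y [Ha Hw HP Hc E]]].
  exists b, [::]; split => //; split => //; rewrite wlen_nil add0n.
  have [H1 _] := ceilnP (suff w s Pt b) (Uof_gt0 r).
  by apply: leq_trans H1 _; rewrite leq_mul2r Hc orbT.
move: Hc E; set x := ceiln _ _ => Hc E.
have Hx0 : 0 < x by apply: ceiln_gt0 => //; exact: Uof_gt0.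
have Hlt : r - x < r by apply: sub_lt.
have Hy0 : 0 < (Jv y (r - x)).1 by rewrite -E.
have [b [q [E' Hb Hwq Hl [Hh Hlen]]]] := IH _ Hlt y Hy0.
exists b, (y :: q); split => //; first by rewrite E.
  by rewrite /is_walk /= Hw.
split; first by rewrite wedges_cons /= negb_or HP Hh.
have [ET EU] := sub_dec Hc; rewrite ET EU in Hlen.
have [_ H2] := ceilnP (w u y) (Uof_gt0 r).
have [H1 _] := ceilnP (w u y) (Uof_gt0 r).
rewrite wlen_cons -addnA; apply: leq_trans (leq_add H1 Hlen) _.
by rewrite -mulnDl subnKC.
Qed.

Lemma sound2 r u : 0 < (Jv u r).2 -> exists a q,
  [/\ (Jv u r).2 = n - a, a <= hst Pt, is_walk w (pv s Pt a) q, last (pv s Pt a) q = u &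
      ~~ has inP (wedges (pv s Pt a) q) /\
      pref w s Pt a + wlen w (pv s Pt a) q <= Tof m n r * Uof m n r].
Proof.
elim/ltn_ind: r u => r IH u H0.
case: (rec2_cases H0) => [[a [-> Hb Hc ->]]|[y [Ha Hw HP Hc E]]].
  exists a, [::]; split => //; split => //; rewrite wlen_nil addn0.
  have [H1 _] := ceilnP (pref w s Pt a) (Uof_gt0 r).
  by apply: leq_trans H1 _; rewrite leq_mul2r Hc orbT.
move: Hc E; set x := ceiln _ _ => Hc E.
have Hx0 : 0 < x by apply: ceiln_gt0 => //; exact: Uof_gt0.
have Hlt : r - x < r by apply: sub_lt.
have Hy0 : 0 < (Jv y (r - x)).2 by rewrite -E.
have [a [q [E' Hb Hwq Hl [Hh Hlen]]]] := IH _ Hlt y Hy0.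
exists a, (rcons q u); split => //; first by rewrite E.
- by rewrite /is_walk rcons_path -/(is_walk w _ q) Hwq Hl /=.
- by rewrite last_rcons.
split; first by rewrite wedges_rcons has_rcons negb_or Hl HP Hh.
have [ET EU] := sub_dec Hc; rewrite ET EU in Hlen.
have [H1 _] := ceilnP (w y u) (Uof_gt0 r).
rewrite wlen_rcons Hl addnA; apply: leq_trans (leq_add Hlen H1) _.
by rewrite -mulnDl subnK.
Qed.

Lemma adj_of u y : u != y -> 0 < w u y -> adj w y u /\ adj w u y.
Proof. by move=> Hne Hw; rewrite /adj Hw !orbT !andbT eq_sym Hne. Qed.

Lemma compl1 sc T q u b : T < TnF m n -> is_walk w u q -> uniq (u :: q) ->
  last u q = pv s Pt b -> b <= hst Pt -> ~~ has inP (wedges u q) ->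
  \sum_(e <- wedges u q) ceiln (w e.1 e.2) (unitU m n sc) +
    ceiln (suff w s Pt b) (unitU m n sc) <= T ->
  b.+1 <= (Jv u (sc * TnF m n + T)).1.
Proof.
elim: q u T => [|y q IH] u T HT Hw Hu Hl Hb Hh Hc.
  rewrite /= in Hl; subst u; apply: base1_pv => //.
  by have [-> ->] := TU_dec sc HT; move: Hc; rewrite big_nil.
move: Hw; rewrite /is_walk /= => /andP [Hw Hwq].
move: Hu => /= /andP [Hu Huq]; rewrite inE negb_or in Hu; case/andP: Hu => Hne _.
move: Hh; rewrite wedges_cons /= negb_or => /andP [HP Hh].
move: Hc; rewrite wedges_cons big_cons /= -addnA; set x := ceiln _ _ => Hc.
have HxT : x <= T by apply: leq_trans (leq_addr _ _) Hc.
have [ET EU] := TU_dec sc HT.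
rewrite -Jv1E; have := @rec1_in (sc * TnF m n + T) u y (proj1 (adj_of Hne Hw)) Hw HP; rewrite ET EU -/x => /(_ HxT).
apply: leq_trans; rewrite -addnBA //; apply: IH => //.
- by apply: leq_ltn_trans (leq_subr _ _) HT.
- by rewrite leq_subRL.
Qed.

Lemma compl2 sc T q a u : T < TnF m n -> a <= hst Pt -> is_walk w (pv s Pt a) q ->
  uniq (pv s Pt a :: q) -> last (pv s Pt a) q = u -> ~~ has inP (wedges (pv s Pt a) q) ->
  ceiln (pref w s Pt a) (unitU m n sc) +
    \sum_(e <- wedges (pv s Pt a) q) ceiln (w e.1 e.2) (unitU m n sc) <= T ->
  n - a <= (Jv u (sc * TnF m n + T)).2.
Proof.
elim/last_ind: q u T => [|q y IH] u T HT Hb Hw Hu Hl Hh Hc.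
  rewrite /= in Hl; subst u; apply: base2_pv => //.
  by have [-> ->] := TU_dec sc HT; move: Hc; rewrite big_nil addn0.
move: Hw; rewrite /is_walk rcons_path => /andP [Hwq Hw].
move: Hu; rewrite -rcons_cons rcons_uniq => /andP [Hu Huq].
have Hne : last (pv s Pt a) q != y.
  by apply/eqP => E; move: Hu; rewrite -E mem_last.
move: Hh; rewrite wedges_rcons has_rcons negb_or => /andP [HP Hh].
rewrite last_rcons in Hl; subst u.
move: Hc; rewrite wedges_rcons -cats1 big_cat big_seq1 /= addnA; set x := ceiln (w _ _) _ => Hc.
have HxT : x <= T by apply: leq_trans (leq_addl _ _) Hc.
have [ET EU] := TU_dec sc HT.
have := @rec2_in (sc * TnF m n + T) y _ (proj2 (adj_of Hne Hw)) Hw HP; rewrite ET EU -/x => /(_ HxT).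
apply: leq_trans; rewrite -addnBA //; apply: IH => //.
- by apply: leq_ltn_trans (leq_subr _ _) HT.
- by rewrite leq_subRL // addnC.
Qed.


Lemma out_J RR u r : r < RR -> Fcore m (li u) (lookh (H RR u)) r = Jv u r.
Proof.
move=> Hr; apply: Fcore_ext => k Hk; rewrite /lookh.
by rewrite (hist_nth u (ltn_trans Hk Hr)) (hist_nth u Hk).
Qed.

Variables (eps : R).
Hypotheses (Hwb : forall u v, w u v <= n ^ c) (Hm2 : 2 <= m)
  (Heps : (0 < eps)%R) (Hme : (2 / eps < m%:R)%R).

Lemma n_pos : 0 < n.
Proof. exact: leq_ltn_trans (leq0n _) (ltn_ord s). Qed.

Lemma hasP_sub (l1 l2 : seq ('I_n * 'I_n)) : {subset l1 <= l2} -> ~~ has inP l2 -> ~~ has inP l1.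
Proof. by move=> Hs /hasPn Hh; apply/hasPn => e /Hs /Hh. Qed.

Lemma suff_le b : suff w s Pt b <= n * n ^ c.
Proof.
apply: leq_trans (wlen_bound _ _ Hwb) _; rewrite leq_mul2r size_drop.
by have := hst_lt; rewrite /hst; lia.
Qed.

Lemma pref_le a : pref w s Pt a <= n * n ^ c.
Proof.
apply: leq_trans (wlen_bound _ _ Hwb) _; rewrite leq_mul2r size_take.
have := hst_lt; rewrite /hst; case: ifP; lia.
Qed.

Lemma sc_facts Q : Q <= 2 * n * n ^ c ->
  [/\ Q < 2 ^ (trunc_log 2 Q).+1, 2 ^ (trunc_log 2 Q).+1 <= 2 * maxn Q 1 &
      (trunc_log 2 Q).+1 < Sc c n].
Proof.
move=> HQ; split.
- exact: trunc_log_ltn.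
- case: (posnP Q) => [->|HQ0]; first by rewrite trunc_log0.
  rewrite expnS leq_mul2l /= (maxn_idPl HQ0).
  exact: trunc_logP.
- rewrite /Sc addn2 ltnS; apply: ltnW.
  by apply: tl_lt; [rewrite muln_gt0 addn2 | apply: Q_bound => //; exact: n_pos].
Qed.

Lemma part1 i j : i <= hst Pt -> i < j <= hst Pt ->
  good_approx w s Pt eps ((output Alg w id s Pt (pv s Pt i)).1 j)
    (fun a => a = i) (fun b => j <= b).
Proof.
move=> Hi /andP [Hij Hj]; have Hn := n_pos.
set v := pv s Pt i; set h := H (rounds m c n) v.
have Eb : best1 m c (li v) h j = ominl [seq (if j < (Jv v r).1
     then Some (pref w s Pt i + Tof m n r * Uof m n r) else None) | r <- iota 0 (rounds m c n)].
  rewrite /best1 li_path_pv // [li_n _]/=; congr ominl; apply/eq_in_map => r.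
  by rewrite mem_iota add0n => /andP [_ Hr]; rewrite out_J.
have -> : (output Alg w id s Pt v).1 j = omap (fun x : nat => (x%:R : R)%R) (best1 m c (li v) h j)
  by [].
rewrite Eb; split.
  case E: (ominl _) => [x|] //=.
  have /mapP [r Hr] := ominl_in E; case: ifP => // Hjr [Ex].
  have [b [q [Eb1 Hb Hw Hl [Hh Hlen]]]] := sound1 (leq_ltn_trans (leq0n _) Hjr).
  exists (pref w s Pt i + wlen w v q + suff w s Pt b); split.
    exists i, b, q; split => //; first by move: Hjr; rewrite Eb1.
  by rewrite ler_nat Ex -addnA leq_add2l.
move=> L [a [b [q [-> Hbj Ha' Hb' [Hw Hl Hh Hsz EL]]]]].
have {}Hsz : size q <= zeta n by apply: zeta_ge; exact: Hsz.
have [q' [Hw' Hl' Hu' Hs' [Hsub' Hle' _ _]]] := uniqify Hw.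
have Hh' : ~~ has inP (wedges v q') := hasP_sub Hsub' Hh.
set Q := wlen w v q' + suff w s Pt b.
have HQn : Q <= 2 * n * n ^ c.
  rewrite -mulnA mul2n -addnn leq_add ?suff_le //.
  apply: leq_trans (wlen_bound _ _ Hwb) _; rewrite leq_mul2r.
  by apply/orP; right; exact: leq_trans Hs' (leq_trans Hsz (zeta_le n)).
have [HQ H2 Hsc] := sc_facts HQn.
set sc := (trunc_log 2 Q).+1 in HQ H2 Hsc.
set U := unitU m n sc.
have HU : 0 < U by rewrite /U /unitU leq_maxl.
set A := \sum_(e <- wedges v q') ceiln (w e.1 e.2) U + ceiln (suff w s Pt b) U.
have HA : A * U <= Q + (size q').+1 * U.-1.
  have H1 := sum_ceil (wedges v q') (fun e => w e.1 e.2) HU.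
  have [_ H3] := ceilnP (suff w s Pt b) HU.
  rewrite /A mulnDl mulSn; move: H1 H3; rewrite size_wedges /Q /wlen.
  move: (\sum_(_ <- _) _) (\sum_(_ <- _) _) => S1 S2; move: (ceiln _ _) => C; lia.
have [HAT HmA] := scale_arith Hm2 (leq_trans Hs' Hsz : (size q').+1 <= (zeta n).+1) HQ H2
  (erefl U) HA.
have HJ := compl1 (sc:=sc) HAT Hw' Hu' (etrans Hl' Hl) Hb' Hh' (leqnn A).
set r := sc * TnF m n + A in HJ.
have [ET EU] := TU_dec sc HAT.
have Hr : r < rounds m c n.
  rewrite rounds_pos // /r; apply: leq_trans (_ : sc.+1 * TnF m n <= _).
    by rewrite mulSn addnC ltn_add2r.
  by rewrite leq_mul2r Hsc orbT.
have [x Ex Hx] : exists2 x, ominl [seq (if j < (Jv v r0).1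
     then Some (pref w s Pt i + Tof m n r0 * Uof m n r0) else None) | r0 <- iota 0 (rounds m c n)]
     = Some x & x <= pref w s Pt i + A * U.
  apply: ominl_le; apply/mapP; exists r; first by rewrite mem_iota add0n Hr.
  by rewrite (leq_ltn_trans Hbj HJ) -/r ET EU.
rewrite Ex /=; apply: (real_step (m := m)) => //.
apply: leq_trans (_ : m * (pref w s Pt i + A * U) <= _); first by rewrite leq_mul2l Hx orbT.
rewrite EL mulnDr; apply: leq_trans (leq_add (leqnn _) HmA) _.
rewrite -addnA [X in _ <= X]mulnDr leq_add //; first by rewrite leq_mul // leq_addr.
by rewrite leq_mul2l /Q leq_add2r Hle' orbT.
Qed.

Lemma part2 i j : i <= hst Pt -> j < i ->
  good_approx w s Pt eps ((output Alg w id s Pt (pv s Pt i)).2 j)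
    (fun a => a <= j) (fun b => b = i).
Proof.
move=> Hi Hji; have Hn := n_pos; have Hhn := hst_lt.
set v := pv s Pt i; set h := H (rounds m c n) v.
have Eb : best2 m c (li v) h j = ominl [seq (if n - j <= (Jv v r).2
     then Some (Tof m n r * Uof m n r + suff w s Pt i) else None) | r <- iota 0 (rounds m c n)].
  rewrite /best2 li_path_pv // [li_n _]/=; congr ominl; apply/eq_in_map => r.
  by rewrite mem_iota add0n => /andP [_ Hr]; rewrite out_J.
have -> : (output Alg w id s Pt v).2 j = omap (fun x : nat => (x%:R : R)%R) (best2 m c (li v) h j)
  by [].
rewrite Eb; split.
  case E: (ominl _) => [x|] //=.
  have /mapP [r Hr] := ominl_in E; case: ifP => // Hjr [Ex].
  have H0 : 0 < (Jv v r).2 by apply: leq_trans Hjr; lia.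
  have [a [q [Ea Ha Hw Hl [Hh Hlen]]]] := sound2 H0.
  exists (pref w s Pt a + wlen w (pv s Pt a) q + suff w s Pt i); split.
    exists a, i, q; split => //; first by move: Hjr; rewrite Ea; lia.
  by rewrite ler_nat Ex leq_add2r.
move=> L [a [b [q [Haj -> Ha' Hb' [Hw Hl Hh Hsz EL]]]]].
have {}Hsz : size q <= zeta n by apply: zeta_ge; exact: Hsz.
have [q' [Hw' Hl' Hu' Hs' [Hsub' Hle' _ _]]] := uniqify Hw.
have Hh' : ~~ has inP (wedges (pv s Pt a) q') := hasP_sub Hsub' Hh.
set Q := pref w s Pt a + wlen w (pv s Pt a) q'.
have HQn : Q <= 2 * n * n ^ c.
  rewrite -mulnA mul2n -addnn leq_add ?pref_le //.
  apply: leq_trans (wlen_bound _ _ Hwb) _; rewrite leq_mul2r.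
  by apply/orP; right; exact: leq_trans Hs' (leq_trans Hsz (zeta_le n)).
have [HQ H2 Hsc] := sc_facts HQn.
set sc := (trunc_log 2 Q).+1 in HQ H2 Hsc.
set U := unitU m n sc.
have HU : 0 < U by rewrite /U /unitU leq_maxl.
set A := ceiln (pref w s Pt a) U + \sum_(e <- wedges (pv s Pt a) q') ceiln (w e.1 e.2) U.
have HA : A * U <= Q + (size q').+1 * U.-1.
  have H1 := sum_ceil (wedges (pv s Pt a) q') (fun e => w e.1 e.2) HU.
  have [_ H3] := ceilnP (pref w s Pt a) HU.
  rewrite /A mulnDl mulSn; move: H1 H3; rewrite size_wedges /Q /wlen.
  move: (\sum_(_ <- _) _) (\sum_(_ <- _) _) => S1 S2; move: (ceiln _ _) => C; lia.
have [HAT HmA] := scale_arith Hm2 (leq_trans Hs' Hsz : (size q').+1 <= (zeta n).+1) HQ H2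
  (erefl U) HA.
have HJ := compl2 (sc:=sc) HAT Ha' Hw' Hu' (etrans Hl' Hl) Hh' (leqnn A).
set r := sc * TnF m n + A in HJ.
have [ET EU] := TU_dec sc HAT.
have Hr : r < rounds m c n.
  rewrite rounds_pos // /r; apply: leq_trans (_ : sc.+1 * TnF m n <= _).
    by rewrite mulSn addnC ltn_add2r.
  by rewrite leq_mul2r Hsc orbT.
have [x Ex Hx] : exists2 x, ominl [seq (if n - j <= (Jv v r0).2
     then Some (Tof m n r0 * Uof m n r0 + suff w s Pt i) else None) | r0 <- iota 0 (rounds m c n)]
     = Some x & x <= A * U + suff w s Pt i.
  apply: ominl_le; apply/mapP; exists r; first by rewrite mem_iota add0n Hr.
  by rewrite (leq_trans (leq_sub2l n Haj) HJ) -/r ET EU.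
rewrite Ex /=; apply: (real_step (m := m)) => //.
apply: leq_trans (_ : m * (A * U + suff w s Pt i) <= _); first by rewrite leq_mul2l Hx orbT.
rewrite EL mulnDr; apply: leq_trans (leq_add HmA (leqnn _)) _.
rewrite [X in _ <= X]mulnDr leq_add //; last by rewrite leq_mul // leq_addr.
by rewrite leq_mul2l /Q leq_add2l Hle' orbT.
Qed.

Lemma bw : bandwidth_ok Alg w id s Pt 4.
Proof.
move=> r u v Hr Ha.
have -> : alg_msg Alg (li u) (H r u) (id v) = Some (pack n (Jv u r)).
  by rewrite /= /msgF size_hist.
have Hn : 2 <= n.
  move: Ha; rewrite /adj => /andP [Hne _].
  have Hne' : nat_of_ord u <> nat_of_ord v by move=> E; move: Hne; rewrite (ord_inj E) eqxx.
  by have := ltn_ord u; have := ltn_ord v; lia.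
exact: pack_bound (Jv1_le u r) (Jv2_le u r).
Qed.

End Exec.

Theorem lemma7p6 :
  forall (R : realType) (eps : R), (0 < eps)%R -> (eps < 1)%R ->
  forall c : nat,   (* weights and identifiers bounded by n^c *)
  exists (Alg : Algorithm R) (cB K k : nat),
    (* round complexity O~(n^(2/3)):  T(n)^3 <= K n^2 log^k n *)
    (forall n, alg_rounds Alg n ^ 3 <= K * n ^ 2 * (trunc_log 2 n).+1 ^ k) /\
    forall (n : nat) (w : weights n) (id : 'I_n -> nat) (s : 'I_n) (Pt : seq 'I_n),
      (forall u v, w u v <= n ^ c) ->
      injective id -> (forall v, id v < n ^ c) ->
      shortest_path w s Pt ->
      bandwidth_ok Alg w id s Pt cB /\
      forall i, i <= hst Pt ->
        (forall j, i < j <= hst Pt ->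
           good_approx w s Pt eps ((output Alg w id s Pt (pv s Pt i)).1 j)
             (fun a => a = i) (fun b => j <= b)) /\
        (forall j, j < i ->
           good_approx w s Pt eps ((output Alg w id s Pt (pv s Pt i)).2 j)
             (fun a => a <= j) (fun b => b = i)).
Proof.
move=> R eps He He1 c.
set m := maxn 2 (Num.bound (2 / eps)).
have Hm2 : 2 <= m by rewrite leq_maxl.
have Hm0 : 0 < m by apply: leq_trans Hm2.
have Hme : (2 / eps < m%:R :> R)%R.
  apply: (lt_le_trans (archi_boundP _)); first by rewrite divr_ge0 // ltW.
  by rewrite ler_nat leq_maxr.
exists (AlgD R m c), 4, (8 * ((c + 4) * (2 * m + 2)) ^ 3), 3; split.
  by move=> n; exact: rounds_bound.
move=> n w id s Pt Hwb Hinj Hidb Hsp; split.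
  exact: (bw id Hsp Hm0 Hm2 He Hme).
move=> i Hi; split => j Hj.
  exact: (part1 Hinj Hsp Hm0 Hwb Hm2 He Hme Hi Hj).
exact: (part2 Hinj Hsp Hm0 Hwb Hm2 He Hme Hi Hj).
Qed.
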